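(* If $\mathfrak{U}$ is a commutative pseudo-amenable Banach algebra, then $\mathfrak{U}$ is symmetrically pseudo-amenable.
   Context: For a Banach algebra $\mathfrak{U}$, $\mathfrak{U}\widehat{\otimes}\mathfrak{U}$ is the projective tensor product, with $a(b\otimes c)=ab\otimes c$, $(b\otimes c)a=b\otimes ca$, and $\pi(b\otimes c)=bc$ (extended linearly and continuously). The flip is $(b\otimes c)^{\circ}=c\otimes b$; $\mathbf{t}$ is symmetric if $\mathbf{t}^\circ=\mathbf{t}$. An approximate diagonal is a net $\{\mathbf{t}_\lambda\}$ in $\mathfrak{U}\widehat{\otimes}\mathfrak{U}$ (not necessarily bounded) with $a\mathbf{t}_\lambda-\mathbf{t}_\lambda a\to0$ and $\pi(\mathbf{t}_\lambda)a\to a$ for all $a\in\mathfrak{U}$. $\mathfrak{U}$ is pseudo-amenable if it has an approximate diagonal, and symmetrically pseudo-amenable if it has an approximate diagonal consisting of symmetric elements. *)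

(* Defs.v *)
From mathcomp Require Import all_boot all_algebra.
From mathcomp Require Import all_classical all_reals all_analysis.
From mathcomp Require Export complex.
Import numFieldNormedType.Exports.
Import GRing.Theory Num.Theory.

Set Implicit Arguments.
Unset Strict Implicit.
Unset Printing Implicit Defensive.

Local Open Scope ring_scope.
Local Open Scope complex_scope.

Section BanachAlgebra.
Variables (R : realType) (U : completeNormedModType R[i]).

Definition banach_algebra (mul : U -> U -> U) : Prop :=
  [/\ (forall a b c, mul a (mul b c) = mul (mul a b) c),
      (forall a b c, mul (a + b) c = mul a c + mul b c),
      (forall a b c, mul a (b + c) = mul a b + mul a c),
      (forall (k : R[i]) a b, mul (k *: a) b = k *: mul a b) &
      ((forall (k : R[i]) a b, mul a (k *: b) = k *: mul a b) /\
       (forall a b, `|mul a b| <= `|a| * `|b|))].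

Definition commutative_alg (mul : U -> U -> U) : Prop :=
  forall a b, mul a b = mul b a.

(* A finite tensor sum_i a_i (x) b_i is represented by the list of pairs. *)
Definition bilinear_form (B : U -> U -> R[i]) : Prop :=
  [/\ (forall a b c, B (a + b) c = B a c + B b c),
      (forall a b c, B a (b + c) = B a b + B a c),
      (forall (k : R[i]) a b, B (k *: a) b = k * B a b) &
      (forall (k : R[i]) a b, B a (k *: b) = k * B a b)].

(* Two lists represent the same element of the algebraic tensor product
   iff every bilinear form (universal property) takes the same value. *)
Definition tens_eq (s t : seq (U * U)) : Prop :=
  forall B, bilinear_form B ->
    \sum_(p <- s) B p.1 p.2 = \sum_(p <- t) B p.1 p.2.

Definition tens_cost (t : seq (U * U)) : R[i] :=
  \sum_(p <- t) (`|p.1| * `|p.2|).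

(* projective norm of the finite tensor s is < eps:
   ||s||_pi = inf { sum ||c_j|| ||d_j|| : sum c_j (x) d_j = s } < eps *)
Definition projnorm_lt (s : seq (U * U)) (eps : R[i]) : Prop :=
  exists t, tens_eq s t /\ tens_cost t < eps.

Definition tens_opp (s : seq (U * U)) : seq (U * U) :=
  [seq (- p.1, p.2) | p <- s].

(* An element of U (^x) U is represented by a series sum_n u_n.1 (x) u_n.2
   with sum_n ||u_n.1|| ||u_n.2|| < oo. *)
Definition ptensor (u : nat -> U * U) : Prop :=
  exists M : R[i], forall N,
    \sum_(n < N) (`|(u n).1| * `|(u n).2|) <= M.

Definition partial (u : nat -> U * U) (N : nat) : seq (U * U) :=
  [seq u n | n <- iota 0 N].

(* ||u - v||_pi < eps in U (^x) U (the norm of the completion is the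
   limit of the projective norms of the partial sums). *)
Definition pdist_lt (u v : nat -> U * U) (eps : R[i]) : Prop :=
  exists N0, forall N, (N0 <= N)%N ->
    projnorm_lt (partial u N ++ tens_opp (partial v N)) eps.

Definition lact (mul : U -> U -> U) (a : U) (u : nat -> U * U) :=
  fun n => (mul a (u n).1, (u n).2).
Definition ract (mul : U -> U -> U) (u : nat -> U * U) (a : U) :=
  fun n => ((u n).1, mul (u n).2 a).
Definition flip (u : nat -> U * U) := fun n => ((u n).2, (u n).1).
Definition tens_pi (mul : U -> U -> U) (u : nat -> U * U) : U :=
  limn (series (fun n => mul (u n).1 (u n).2)).

Definition symmetric_tensor (u : nat -> U * U) : Prop :=
  forall eps : R[i], 0 < eps -> pdist_lt u (flip u) eps.

Definition directed_set (I : Type) (le : I -> I -> Prop) : Prop :=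
  [/\ inhabited I, (forall i, le i i),
      (forall i j k, le i j -> le j k -> le i k) &
      (forall i j, exists k, le i k /\ le j k)].

Definition approx_diagonal (mul : U -> U -> U) (I : Type)
    (le : I -> I -> Prop) (t : I -> nat -> U * U) : Prop :=
  [/\ (forall i, ptensor (t i)),
      (forall a (eps : R[i]), 0 < eps -> exists i0, forall i, le i0 i ->
          pdist_lt (lact mul a (t i)) (ract mul (t i) a) eps) &
      (forall a (eps : R[i]), 0 < eps -> exists i0, forall i, le i0 i ->
          `|mul (tens_pi mul (t i)) a - a| < eps)].

Definition pseudo_amenable (mul : U -> U -> U) : Prop :=
  exists (I : Type) (le : I -> I -> Prop) (t : I -> nat -> U * U),
    directed_set le /\ approx_diagonal mul le t.

Definition sym_pseudo_amenable (mul : U -> U -> U) : Prop :=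
  exists (I : Type) (le : I -> I -> Prop) (t : I -> nat -> U * U),
    [/\ directed_set le, approx_diagonal mul le t &
        forall i, symmetric_tensor (t i)].

End BanachAlgebra.

(* Main.v *)
Require Import Defs.
From mathcomp Require Import all_boot all_algebra.
From mathcomp Require Import all_classical all_reals all_analysis.
From mathcomp Require Import complex.
From mathcomp Require Import ring.
Import numFieldNormedType.Exports.
Import order.Order.TTheory GRing.Theory Num.Theory.
Set Implicit Arguments.
Unset Strict Implicit.
Local Open Scope ring_scope.
Local Open Scope complex_scope.
Local Open Scope classical_set_scope.

Section S.
Variable R : realType.

Lemma ge0_RRe (z : R[i]) : 0 <= z -> z = (complex.Re z)%:C.
Proof. by case: z => a b /ger0_Im /= ->. Qed.

Lemma tail_small (c : nat -> R[i]) (M : R[i]) :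
  (forall n, 0 <= c n) -> (forall N, \sum_(0 <= n < N) c n <= M) ->
  forall e, 0 < e -> exists N0, forall N K, (N0 <= N)%N -> \sum_(N <= n < K) c n < e.
Proof.
move=> c0 cM e e0.
pose r n := complex.Re (c n).
have cE n : c n = (r n)%:C by rewrite /r -ge0_RRe.
have sE m n : \sum_(m <= k < n) c k = (\sum_(m <= k < n) r k)%:C.
  by rewrite rmorph_sum; apply: eq_bigr => k _; rewrite cE.
pose E : set R := fun x => exists N, x = \sum_(0 <= k < N) r k.
have hs : has_sup E.
  split; first by exists 0, 0%N; rewrite big_geq.
  exists (complex.Re M) => _ [N ->].
  have := cM N; rewrite sE lecE => /andP[_]; done.
have eE : e = (complex.Re e)%:C by rewrite -ge0_RRe // ltW.
have re0 : 0 < complex.Re e by move: e0; rewrite eE ltcR.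
have [x [N0 ->] hx] := sup_adherent re0 hs.
exists N0 => N K N0N.
rewrite sE eE ltcR.
have [NK|KN] := leqP N K; last by rewrite big_geq ?(ltnW KN).
have rpos k : 0 <= r k by move: (c0 k); rewrite cE ler0c.
have split1 : \sum_(0 <= k < K) r k = \sum_(0 <= k < N) r k + \sum_(N <= k < K) r k.
  by rewrite (big_cat_nat (leq0n N) NK).
have ubK : \sum_(0 <= k < K) r k <= sup E by apply: sup_upper_bound => //; exists K.
have mono : \sum_(0 <= k < N0) r k <= \sum_(0 <= k < N) r k.
  rewrite (big_cat_nat (leq0n N0) N0N) /= lerDl; exact: sumr_ge0.
have -> : \sum_(N <= k < K) r k = \sum_(0 <= k < K) r k - \sum_(0 <= k < N) r k.
  by rewrite split1 addrC addKr.
rewrite ltrBlDr; apply: le_lt_trans ubK _.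
by rewrite -ltrBlDl; apply: lt_le_trans hx _; exact: mono.
Qed.

Lemma pair_sum (V : zmodType) (g : nat -> V) K :
  \sum_(0 <= n < K.*2) g n = \sum_(0 <= k < K) (g k.*2 + g k.*2.+1).
Proof.
elim: K => [|K IH]; first by rewrite !big_geq.
by rewrite doubleS !big_nat_recr //= IH addrA.
Qed.

Variable U : completeNormedModType R[i].
Variable mul : U -> U -> U.

Definition h : R[i] := 2^-1.

Lemma hh (x : R[i]) : h * x + h * x = x.
Proof. by rewrite -mulrDl /h -div1r -mulrDl -mulr2n divrr ?mul1r // unitfE pnatr_eq0. Qed.

Lemma normh : `|h| = h.
Proof. by rewrite ger0_norm // /h invr_ge0. Qed.

Definition symt (u : nat -> U * U) : nat -> U * U := fun n =>
  if odd n then ((u n./2).2, h *: (u n./2).1) else (h *: (u n./2).1, (u n./2).2).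

Lemma symt_even u k : symt u k.*2 = (h *: (u k).1, (u k).2).
Proof. by rewrite /symt odd_double doubleK. Qed.

Lemma symt_odd u k : symt u k.*2.+1 = ((u k).2, h *: (u k).1).
Proof.
by rewrite /symt /= odd_double /= uphalf_double.
Qed.

Section Bil.
Variable B : U -> U -> R[i].
Hypothesis hB : bilinear_form B.

Lemma BN1 x y : B (- x) y = - B x y.
Proof. by case: hB => _ _ hZ _; rewrite -scaleN1r hZ mulN1r. Qed.
Lemma BN2 x y : B x (- y) = - B x y.
Proof. by case: hB => _ _ _ hZ; rewrite -scaleN1r hZ mulN1r. Qed.
Lemma BZ1 k x y : B (k *: x) y = k * B x y.
Proof. by case: hB. Qed.
Lemma BZ2 k x y : B x (k *: y) = k * B x y.
Proof. by case: hB. Qed.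

Lemma ev_opp s : \sum_(p <- tens_opp s) B p.1 p.2 = - \sum_(p <- s) B p.1 p.2.
Proof. by rewrite big_map -sumrN; apply: eq_bigr => p _; rewrite BN1. Qed.

Lemma ev_partial (u : nat -> U * U) N :
  \sum_(p <- partial u N) B p.1 p.2 = \sum_(0 <= n < N) B (u n).1 (u n).2.
Proof. by rewrite big_map /index_iota subn0. Qed.

End Bil.

Lemma flipB (B : U -> U -> R[i]) : bilinear_form B -> bilinear_form (fun x y => B y x).
Proof. by case=> h1 h2 h3 h4; split. Qed.

Definition cst (u : nat -> U * U) n := `|(u n).1| * `|(u n).2|.

Lemma cst_ge0 u n : 0 <= cst u n.
Proof. by rewrite mulr_ge0. Qed.

Lemma tail_u u : ptensor u -> forall e, 0 < e ->
  exists N0, forall N K, (N0 <= N)%N -> \sum_(N <= n < K) cst u n < e.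
Proof.
move=> [M HM]; apply: (@tail_small (cst u) M) => [n|N]; first exact: cst_ge0.
by rewrite big_mkord; apply: HM.
Qed.

Lemma term_small u : ptensor u -> forall e, 0 < e ->
  exists N0, forall K, (N0 <= K)%N -> cst u K < e.
Proof.
move=> pu e e0; have [N0 HN] := tail_u pu e0; exists N0 => K hK.
by have := HN K K.+1 hK; rewrite big_nat1.
Qed.

Lemma sym_symt u : ptensor u -> symmetric_tensor (symt u).
Proof.
move=> pu eps eps0; have [N0 HN0] := term_small pu eps0.
exists N0.*2 => N hN.
have hK : (N0 <= N./2)%N by rewrite -(doubleK N0) half_leq.
rewrite -(odd_double_half N); set K := N./2.
have pairz B : bilinear_form B -> \sum_(0 <= k < K)
   ((B (symt u k.*2).1 (symt u k.*2).2 - B (symt u k.*2).2 (symt u k.*2).1) +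
    (B (symt u k.*2.+1).1 (symt u k.*2.+1).2 - B (symt u k.*2.+1).2 (symt u k.*2.+1).1)) = 0.
  move=> hB; rewrite big1 // => k _; rewrite symt_even symt_odd /=.
  by rewrite addrC subrKA subrr.
case: (odd N); [rewrite add1n | rewrite add0n].
- exists [:: (h *: (u K).1, (u K).2); (- (u K).2, h *: (u K).1)]; split.
    move=> B hB; rewrite big_cat ev_opp // !ev_partial /= -sumrB.
    rewrite big_nat_recr //= pair_sum pairz // add0r symt_even /=.
    by rewrite !big_cons big_nil addr0 BN1.
  rewrite /tens_cost !big_cons big_nil addr0 /= normrN !normrZ normh.
  by rewrite mulrAC -mulrA [X in _ + X]mulrCA hh mulrC; apply: HN0.
- exists [::]; split; last by rewrite /tens_cost big_nil.
  move=> B hB; rewrite big_cat ev_opp // !ev_partial /= -sumrB.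
  by rewrite pair_sum pairz // big_nil.
Qed.


Lemma hh1 : h + h = 1 :> R[i].
Proof. by have := hh 1; rewrite mulr1. Qed.

Lemma ptensor_symt u : ptensor u -> ptensor (symt u).
Proof.
move=> [M HM]; exists M => N.
have cv k : `|(symt u k.*2).1| * `|(symt u k.*2).2| +
            `|(symt u k.*2.+1).1| * `|(symt u k.*2.+1).2| = cst u k.
  rewrite symt_even symt_odd /= !normrZ normh -mulrA [X in _ + X]mulrCA.
  by rewrite [X in _ + h * X]mulrC hh.
apply: le_trans (HM N).
rewrite -(big_mkord xpredT (fun n => `|(symt u n).1| * `|(symt u n).2|)).
rewrite -(big_mkord xpredT (fun n => cst u n)).
apply: (@le_trans _ _ (\sum_(0 <= n < N.*2) `|(symt u n).1| * `|(symt u n).2|)).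
  rewrite (big_cat_nat (leq0n N) (_ : N <= N.*2)%N) /=; last by rewrite -addnn leq_addr.
  by rewrite lerDl sumr_ge0 // => n _; rewrite mulr_ge0.
rewrite pair_sum le_eqVlt; apply/orP; left; apply/eqP/eq_bigr => k _ /=; exact: cv.
Qed.

Lemma hle (x : R[i]) : 0 <= x -> h * x <= x.
Proof. by move=> x0; rewrite -{2}(hh x) lerDr mulr_ge0 // /h invr_ge0 ler0n. Qed.

Section Alg.
Hypothesis hmul : banach_algebra mul.
Hypothesis hcomm : commutative_alg mul.

Lemma mulZl k x y : mul (k *: x) y = k *: mul x y.
Proof. by case: hmul. Qed.
Lemma mulZr k x y : mul x (k *: y) = k *: mul x y.
Proof. by case: hmul => _ _ _ _ []. Qed.
Lemma normM x y : `|mul x y| <= `|x| * `|y|.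
Proof. by case: hmul => _ _ _ _ []. Qed.

Lemma pi_symt u : ptensor u -> tens_pi mul (symt u) = tens_pi mul u.
Proof.
move=> pu.
pose w k := mul (u k).1 (u k).2.
have wle k : `|w k| <= cst u k by apply: normM.
have Wc : cvgn (series w).
  apply/cauchy_cvgP/cauchy_seriesP => e e0.
  have [N0 HN0] := tail_u pu e0.
  exists ((fun n => is_true (N0 <= n)%N) : set nat, setT : set nat) => /=.
    by split; exists N0.
  move=> [m n] [/= hm _].
  apply: le_lt_trans (ler_norm_sum _ _ _) _.
  apply: le_lt_trans (HN0 m n hm); exact: ler_sum.
pose p k := mul (symt u k).1 (symt u k).2.
have pE k : p k.*2 + p k.*2.+1 = w k.
  by rewrite /p symt_even symt_odd /= mulZl mulZr hcomm -scalerDl hh1 scale1r.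
have pE2 k : p k.*2 = h *: w k by rewrite /p symt_even /= mulZl.
have sE K : series p K.*2 = series w K.
  by rewrite /series /= pair_sum; apply: eq_bigr => k _; rewrite pE.
have sE1 K : series p K.*2.+1 = series w K + h *: w K.
  by rewrite -sE /series /= big_nat_recr //= pE2.
rewrite /tens_pi; apply: (cvg_lim (@norm_hausdorff _ _)).
apply/cvgrPdist_lt => e e0.
have he : 0 < h * e by rewrite mulr_gt0 // /h invr_gt0.
have [N1 _ HN1] := (iffLR (cvgrPdist_lt _ _) Wc) _ he.
have [N0 HN0] := term_small pu he.
exists (maxn N0 N1).*2 => // n hn.
have hK1 : (N1 <= n./2)%N.
  by rewrite -(doubleK N1) half_leq // (leq_trans _ hn) // leq_double leq_maxr.
have hK0 : (N0 <= n./2)%N.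
  by rewrite -(doubleK N0) half_leq // (leq_trans _ hn) // leq_double leq_maxl.
have hw := HN1 _ hK1.
rewrite -(odd_double_half n); case: (odd n); [rewrite add1n | rewrite add0n].
- rewrite sE1.
  rewrite opprD addrA; apply: le_lt_trans (ler_normD _ _) _.
  rewrite -[e]hh; apply: ltrD => //; rewrite normrN normrZ normh.
  apply: le_lt_trans (HN0 _ hK0); apply: le_trans (wle _).
  by apply: hle.
- rewrite sE; apply: lt_trans hw _.
  by rewrite -{2}[e]hh ltrDr.
Qed.


Lemma diag_symt a u eps : ptensor u -> 0 < eps ->
  pdist_lt (lact mul a u) (ract mul u a) (h * eps) ->
  pdist_lt (lact mul a (symt u)) (ract mul (symt u) a) eps.
Proof.
move=> pu eps0 [N1 HN1].
have h0 : 0 < h by rewrite /h invr_gt0.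
have a1 : 0 < `|a| + 1 by apply: ltr_wpDl (normr_ge0 a) ltr01.
have he : 0 < h * eps / (`|a| + 1) by rewrite divr_gt0 ?mulr_gt0.
have [N0 HN0] := term_small pu he.
exists (maxn N0 N1).*2 => N hN.
have hK1 : (N1 <= N./2)%N.
  by rewrite -(doubleK N1) half_leq // (leq_trans _ hN) // leq_double leq_maxr.
have hK0 : (N0 <= N./2)%N.
  by rewrite -(doubleK N0) half_leq // (leq_trans _ hN) // leq_double leq_maxl.
have [t [tE tc]] := HN1 _ hK1.
move: hK0 hK1 tE tc (odd_double_half N); move: (N./2) => K hK0 hK1 tE tc NE.
have Hsum B : bilinear_form B ->
  \sum_(0 <= k < K)
   ((B (mul a (symt u k.*2).1) (symt u k.*2).2 - B (symt u k.*2).1 (mul (symt u k.*2).2 a)) +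
    (B (mul a (symt u k.*2.+1).1) (symt u k.*2.+1).2 -
     B (symt u k.*2.+1).1 (mul (symt u k.*2.+1).2 a))) =
  h * \sum_(q <- t) B q.1 q.2 - h * \sum_(q <- t) B q.2 q.1.
  move=> hB.
  have F1 := tE B hB; rewrite big_cat ev_opp // !ev_partial /= -sumrB /lact /ract /= in F1.
  have F2 := tE _ (flipB hB); rewrite big_cat (ev_opp (flipB hB)) !(ev_partial (fun x y => B y x)) /= -sumrB /lact /ract /= in F2.
  rewrite -F1 -F2 !mulr_sumr -sumrB; apply: eq_bigr => k _; rewrite symt_even symt_odd /=.
  rewrite mulZr mulZl !(BZ1 hB) !(BZ2 hB) (hcomm a (u k).2) (hcomm (u k).1 a).
  ring.
have R1 B : bilinear_form B ->
  \sum_(q <- t) B (h *: q.1) q.2 = h * \sum_(q <- t) B q.1 q.2.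
  by move=> hB; rewrite mulr_sumr; apply: eq_bigr => q _; rewrite (BZ1 hB).
have R2 B : bilinear_form B ->
  \sum_(q <- t) B (- (h *: q.2)) q.1 = - (h * \sum_(q <- t) B q.2 q.1).
  by move=> hB; rewrite mulr_sumr -sumrN; apply: eq_bigr => q _; rewrite (BN1 hB) (BZ1 hB).
have C1 : \sum_(q <- t) `|h *: q.1| * `|q.2| + \sum_(q <- t) `|- (h *: q.2)| * `|q.1| =
          tens_cost t.
  rewrite /tens_cost -[X in _ = X]hh !mulr_sumr; congr (_ + _); apply: eq_bigr => q _;
  by rewrite ?normrN normrZ normh; ring.
move: NE; case: (odd N) => NE; rewrite -NE ?add1n ?add0n.
- exists ([seq (h *: q.1, q.2) | q <- t] ++ [seq (- (h *: q.2), q.1) | q <- t] ++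
     [:: (mul a (h *: (u K).1), (u K).2); (- (h *: (u K).1), mul (u K).2 a)]); split.
    move=> B hB; rewrite big_cat ev_opp // !ev_partial /= -sumrB /lact /ract /=.
    rewrite big_nat_recr //= pair_sum Hsum // !big_cat !big_map /= R1 // R2 //.
    rewrite !big_cons big_nil symt_even /= (BN1 hB); ring.
  rewrite /tens_cost !big_cat !big_map /= addrA C1 !big_cons big_nil addr0.
  rewrite -[eps]hh ltrD //.
  rewrite /= normrN.
  apply: (@le_lt_trans _ _ (`|a| * cst u K)).
    apply: (@le_trans _ _ (`|a| * (h * cst u K) + `|a| * (h * cst u K))); last first.
      by rewrite -mulrDr hh.
    apply: lerD.
      apply: le_trans (ler_wpM2r (normr_ge0 _) (normM _ _)) _.
      by rewrite normrZ normh /cst le_eqVlt; apply/orP; left; apply/eqP; ring.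
    rewrite mulrC; apply: le_trans (ler_wpM2r (normr_ge0 _) (normM _ _)) _.
    by rewrite normrZ normh /cst le_eqVlt; apply/orP; left; apply/eqP; ring.
  apply: (@le_lt_trans _ _ ((`|a| + 1) * cst u K)).
    by rewrite ler_wpM2r ?cst_ge0 // lerDl ler01.
  have e1 : (`|a| + 1) * (h * eps / (`|a| + 1)) = h * eps.
    by rewrite mulrC divfK // gt_eqF.
  by rewrite -e1 ltr_pM2l //; apply: HN0.
- exists ([seq (h *: q.1, q.2) | q <- t] ++ [seq (- (h *: q.2), q.1) | q <- t] ++ [::]); split.
    move=> B hB; rewrite big_cat ev_opp // !ev_partial /= -sumrB /lact /ract /=.
    rewrite pair_sum Hsum // !big_cat !big_map /= R1 // R2 // big_nil; ring.
  rewrite /tens_cost !big_cat !big_map /= addrA C1 big_nil addr0.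
  by apply: lt_le_trans tc _; apply: hle; rewrite ltW.
Qed.

End Alg.
End S.

Theorem corollary3p3 (R : realType) (U : completeNormedModType R[i])
    (mul : U -> U -> U) :
  banach_algebra mul -> commutative_alg mul -> pseudo_amenable mul ->
  sym_pseudo_amenable mul.
Proof.
move=> hm hc [I [le [t [dir [pt hl hp]]]]].
exists I, le, (fun i => symt (t i)); split => //.
- split.
  + by move=> i; apply: ptensor_symt.
  + move=> a eps e0.
    have he : 0 < h R * eps by rewrite mulr_gt0 // /h invr_gt0.
    have [i0 Hi] := hl a _ he.
    by exists i0 => i hi; apply: (diag_symt hm hc) => //; apply: Hi.
  + move=> a eps e0; have [i0 Hi] := hp a eps e0.
    by exists i0 => i hi; rewrite (pi_symt hm hc) //; apply: Hi.
- by move=> i; apply: sym_symt.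
Qed.
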